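(* Let $A$ be an $n\times n$ Bott matrix, $M=M(A)$ and $\Gamma=\pi_1(M)$. Then $H^1(\Gamma,\mathbb{Z})\cong\mathbb{Z}^{b_1}$, where $b_1$ is the first Betti number of $M$. Moreover, $b_1$ equals the number of zero columns of $A$.
   Context: A Bott matrix is a strictly upper triangular matrix $A=[a_{ij}]\in\mathbb{F}_2^{n\times n}$. The group $C_2^n=\langle c_1,\dots,c_n\rangle$ acts freely on $T^n=(S^1)^n\subset\mathbb{C}^n$ by $$c_i\cdot(z_1,\dots,z_n)=(z_1,\dots,z_{i-1},-z_i,c_{i,i+1}(z_{i+1}),\dots,c_{i,n}(z_n)),$$ with $c_{i,j}(z)=z$ if $a_{ij}=0$ and $c_{i,j}(z)=\bar z$ if $a_{ij}=1$. The real Bott manifold is $M(A)=T^n/C_2^n$. *)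

(* Defs.v *)
From Stdlib Require Import Reals.
From mathcomp Require Import all_boot all_order all_algebra.

Set Implicit Arguments.
Unset Strict Implicit.
Unset Printing Implicit Defensive.

Import GRing.Theory.
Local Open Scope ring_scope.

Definition bott_matrix (n : nat) (A : 'M['F_2]_n) : Prop :=
  forall i j : 'I_n, (j <= i)%N -> A i j = 0.

(* Points of the universal cover R^n of T^n (coordinate x_j <-> z_j = exp(2 pi i x_j)). *)
Definition vecR (n : nat) := 'I_n -> R.

(* Lift of c_i to R^n: z_i -> -z_i becomes x_i -> x_i + 1/2,
   z_j -> conj z_j (a_ij = 1, j > i) becomes x_j -> -x_j. *)
Definition bott_lift (n : nat) (A : 'M['F_2]_n) (i : 'I_n) (x : vecR n) : vecR n :=
  fun j => if (j < i)%N then x j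
           else if j == i then Rplus (x j) (Rinv (Rplus R1 R1))
           else if A i j == 1 then Ropp (x j) else x j.

Definition transl (n : nat) (j : 'I_n) (b : bool) (x : vecR n) : vecR n :=
  fun k => if k == j then (if b then Rplus (x k) R1 else Rminus (x k) R1) else x k.

Definition bott_lift_inv (n : nat) (A : 'M['F_2]_n) (i : 'I_n) (x : vecR n) : vecR n :=
  fun j => if (j < i)%N then x j
           else if j == i then Rminus (x j) (Rinv (Rplus R1 R1))
           else if A i j == 1 then Ropp (x j) else x j.

(* Gamma = pi_1(M(A)), realised as the group of all lifts to the universal cover
   R^n of the deck transformations of T^n -> T^n/C_2^n = M(A): the subgroup of
   bijections of R^n generated by the translations Z^n and the lifts of the c_i. *)
Inductive bott_group (n : nat) (A : 'M['F_2]_n) : (vecR n -> vecR n) -> Prop :=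
  | bg_id : bott_group A id
  | bg_transl (j : 'I_n) (b : bool) : bott_group A (transl j b)
  | bg_lift (i : 'I_n) : bott_group A (bott_lift A i)
  | bg_lift_inv (i : 'I_n) : bott_group A (bott_lift_inv A i)
  | bg_comp g h : bott_group A g -> bott_group A h -> bott_group A (g \o h).

(* Group homomorphisms Gamma -> G into an additive abelian group G
   (G = Z gives H^1(Gamma, Z) = Hom(Gamma, Z), trivial coefficients). *)
Definition is_hom (n : nat) (A : 'M['F_2]_n) (G : zmodType)
    (phi : (vecR n -> vecR n) -> G) : Prop :=
  forall g h, bott_group A g -> bott_group A h -> phi (g \o h) = phi g + phi h.

Definition H1Z_iso_Zpow (n : nat) (A : 'M['F_2]_n) (k : nat) : Prop :=
  exists F : 'rV[int]_k -> (vecR n -> vecR n) -> int,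
    [/\ forall v, is_hom A (F v),
        forall u v g, bott_group A g -> F (u + v) g = F u g + F v g,
        forall v, (forall g, bott_group A g -> F v g = 0) -> v = 0
      & forall phi, is_hom A phi ->
          exists v, forall g, bott_group A g -> F v g = phi g].

(* First Betti number: b_1(M) = dim_Q H^1(M; Q) = dim_Q Hom(pi_1 M, Q).
   is_betti1 A k : Hom(Gamma, Q) is isomorphic to Q^k as a Q-vector space. *)
Definition is_betti1 (n : nat) (A : 'M['F_2]_n) (k : nat) : Prop :=
  exists F : 'rV[rat]_k -> (vecR n -> vecR n) -> rat,
    [/\ forall v, is_hom A (F v),
        forall (a : rat) u v g, bott_group A g ->
          F (a *: u + v) g = a * F u g + F v g,
        forall v, (forall g, bott_group A g -> F v g = 0) -> v = 0
      & forall phi, is_hom A phi ->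
          exists v, forall g, bott_group A g -> F v g = phi g].

Definition zero_columns (n : nat) (A : 'M['F_2]_n) : nat :=
  #|[set j : 'I_n | [forall i : 'I_n, A i j == 0]]|.

(* Main.v *)
Require Import Defs.
From Stdlib Require Import Reals.
From mathcomp Require Import all_boot all_order all_algebra.
From Stdlib Require Import ClassicalEpsilon FunctionalExtensionality.
From mathcomp Require Import Rstruct ring lra zify.

Set Implicit Arguments.
Unset Strict Implicit.
Unset Printing Implicit Defensive.
Import GRing.Theory Num.Theory.
Local Open Scope ring_scope.

Lemma RhalfE : Rinv (Rplus R1 R1) = (2%:R : R)^-1. Proof. by []. Qed.
Lemma R1E' : R1 = 1 :> R. Proof. by []. Qed.

Ltac ocase k i :=
  let h := fresh "h" in
  case: (ltngtP k i) => h;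
  [ rewrite ?h ?(ltn_eqF h : (k == i) = false)
  | rewrite ?(gtn_eqF h : (k == i) = false) ?(ltnNge k i) ?(ltnW h)
  | let E := fresh "E" in have E : k = i := val_inj h; subst k; rewrite ?ltnn ?eqxx ].

Ltac fin := rewrite /= ?RhalfE ?RplusE ?RminusE ?RoppE ?R1E';
  repeat match goal with |- context[if ?b then _ else _] => case: b end; rewrite /= ?RoppE ?RplusE ?RminusE ?R1E'; lra.

Section Ids.
Variables (n : nat) (A : 'M['F_2]_n).

Lemma E1 (i : 'I_n) : transl i true = bott_lift A i \o bott_lift A i.
Proof.
apply: functional_extensionality => x; apply: functional_extensionality => k.
rewrite /transl /bott_lift /=.
ocase k i; fin.
Qed.

Lemma E2 (i : 'I_n) : transl i false \o transl i true = id.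
Proof.
apply: functional_extensionality => x; apply: functional_extensionality => k.
rewrite /transl /=.
ocase k i; fin.
Qed.

Lemma E3 (i : 'I_n) : bott_lift_inv A i \o bott_lift A i = id.
Proof.
apply: functional_extensionality => x; apply: functional_extensionality => k.
rewrite /bott_lift_inv /bott_lift /=.
ocase k i; fin.
Qed.

Lemma E4 (i0 i : 'I_n) : (i0 < i)%N -> A i0 i == 1 ->
  bott_lift A i0 \o bott_lift A i = bott_lift_inv A i \o bott_lift A i0.
Proof.
move=> hi hA.
apply: functional_extensionality => x; apply: functional_extensionality => k.
rewrite /bott_lift_inv /bott_lift /=.
ocase k i0; [ocase k i | ocase k i | ocase i0 i]; first [lia | rewrite ?hA; fin].
Qed.

End Ids.

Definition zc n (A : 'M['F_2]_n) (j : 'I_n) : bool := [forall i : 'I_n, A i j == 0].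

Lemma zcP n (A : 'M['F_2]_n) j : zc A j -> forall i, A i j = 0.
Proof. by move/forallP=> H i; apply/eqP. Qed.

Definition zv (n : nat) : vecR n := fun _ => 0.

Lemma shift_ex n (A : 'M['F_2]_n) j g : zc A j -> bott_group A g ->
  exists m : int, forall x, g x j = x j + m%:~R / 2%:R.
Proof.
move=> zj; elim=> {g}.
- by exists 0 => x /=; lra.
- move=> j' b; exists (if j == j' then (if b then 2 else -2) else 0) => x.
  rewrite /transl; case: (j == j'); [case: b|]; fin.
- move=> i; exists (if (j < i)%N then 0 else if j == i then 1 else 0) => x.
  rewrite /bott_lift (zcP zj i).
  case: (j < i)%N; [|case: (j == i)]; rewrite /=; try fin.
- move=> i; exists (if (j < i)%N then 0 else if j == i then -1 else 0) => x.
  rewrite /bott_lift_inv (zcP zj i).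
  case: (j < i)%N; [|case: (j == i)]; rewrite /=; try fin.
- move=> g h _ [mg Hg] _ [mh Hh]; exists (mg + mh) => x.
  rewrite /= Hg Hh intrD; lra.
Qed.

Definition coord (n : nat) (j : 'I_n) (g : vecR n -> vecR n) : int :=
  epsilon (inhabits 0) (fun m : int => g (@zv n) j = m%:~R / 2%:R).

Lemma coordP n (A : 'M['F_2]_n) j g : zc A j -> bott_group A g ->
  forall x, g x j = x j + (coord j g)%:~R / 2%:R.
Proof.
move=> zj Hg; have [m Hm] := shift_ex zj Hg.
have E : g (@zv n) j = (coord j g)%:~R / 2%:R.
  rewrite /coord; apply: (epsilon_spec (inhabits 0) (fun m : int => g (@zv n) j = m%:~R / 2%:R)).
  by exists m; rewrite Hm /zv add0r.
by move=> x; rewrite Hm -E Hm /zv add0r.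
Qed.

Lemma coord_uniq n (A : 'M['F_2]_n) j g (m : int) : zc A j -> bott_group A g ->
  (forall x, g x j = x j + m%:~R / 2%:R) -> coord j g = m.
Proof.
move=> zj Hg H; have := coordP zj Hg (@zv n); rewrite H => /addrI E.
apply: (@intr_inj R); lra.
Qed.

Lemma coord_hom n (A : 'M['F_2]_n) j g h : zc A j -> bott_group A g -> bott_group A h ->
  coord j (g \o h) = coord j g + coord j h.
Proof.
move=> zj Hg Hh; apply: (coord_uniq zj (bg_comp Hg Hh)) => x.
rewrite /= (coordP zj Hg) (coordP zj Hh) intrD; lra.
Qed.

Lemma coord_lift n (A : 'M['F_2]_n) j i : zc A j ->
  coord j (bott_lift A i) = if i == j then 1 else 0.
Proof.
move=> zj; apply: (coord_uniq zj (bg_lift A i)) => x.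
rewrite /bott_lift; case: (eqVneq i j) => [<-|nij].
  rewrite ltnn ?eqxx; fin.
rewrite (zcP zj i).
case: ifP => _; fin.
Qed.

Lemma hom_id n (A : 'M['F_2]_n) (G : zmodType) (psi : (vecR n -> vecR n) -> G) :
  is_hom A psi -> psi id = 0.
Proof.
move=> H; have := H id id (bg_id A) (bg_id A).
change (id \o id) with (@id (vecR n)).
by move=> /(congr1 (fun t => t - psi id)); rewrite addrK subrr => <-.
Qed.

Lemma hom_inv n (A : 'M['F_2]_n) (G : zmodType) (psi : (vecR n -> vecR n) -> G) g h :
  is_hom A psi -> bott_group A g -> bott_group A h -> g \o h = id -> psi g = - psi h.
Proof.
move=> H Hg Hh E; have := H g h Hg Hh; rewrite E (hom_id H) => /esym /eqP.
by rewrite addr_eq0 => /eqP.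
Qed.

Lemma hom_ext n (A : 'M['F_2]_n) (G : zmodType) (psi1 psi2 : (vecR n -> vecR n) -> G) :
  is_hom A psi1 -> is_hom A psi2 ->
  (forall i, psi1 (bott_lift A i) = psi2 (bott_lift A i)) ->
  forall g, bott_group A g -> psi1 g = psi2 g.
Proof.
move=> H1 H2 Hs g; elim=> {g}.
- by rewrite (hom_id H1) (hom_id H2).
- move=> j b.
  have T : psi1 (transl j true) = psi2 (transl j true).
    by rewrite (E1 A) (H1 _ _ (bg_lift A j) (bg_lift A j)) (H2 _ _ (bg_lift A j) (bg_lift A j)) Hs.
  case: b => //.
  by rewrite (hom_inv H1 (bg_transl A j false) (bg_transl A j true) (E2 j))
             (hom_inv H2 (bg_transl A j false) (bg_transl A j true) (E2 j)) T.
- exact: Hs.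
- move=> i.
  by rewrite (hom_inv H1 (bg_lift_inv A i) (bg_lift A i) (E3 A i))
             (hom_inv H2 (bg_lift_inv A i) (bg_lift A i) (E3 A i)) Hs.
- by move=> g h Hg IHg Hh IHh; rewrite H1 // H2 // IHg IHh.
Qed.

Lemma F2_ne0 (x : 'F_2) : x != 0 -> x == 1.
Proof. by case: x => [[|[|m]] //]. Qed.

Lemma phi_nz n (A : 'M['F_2]_n) (G : numDomainType) (phi : (vecR n -> vecR n) -> G) i :
  bott_matrix A -> is_hom A phi -> ~~ zc A i -> phi (bott_lift A i) = 0.
Proof.
move=> bott H /forallPn [i0 nz].
have hA := F2_ne0 nz.
have hi : (i0 < i)%N.
  rewrite ltnNge; apply/negP => le; by rewrite (bott i0 i le) eqxx in nz.
have := H _ _ (bg_lift A i0) (bg_lift A i).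
rewrite (E4 hi hA) (H _ _ (bg_lift_inv A i) (bg_lift A i0)).
rewrite (hom_inv H (bg_lift_inv A i) (bg_lift A i) (E3 A i)).
set x := phi (bott_lift A i); set y := phi (bott_lift A i0) => E.
have Ex : x = - x by apply: (addrI y); rewrite -E addrC.
have : x *+ 2 == 0 by rewrite mulr2n {1}Ex addNr.
by rewrite mulrn_eq0 /= => /eqP.
Qed.

Definition Zs n (A : 'M['F_2]_n) := [set j : 'I_n | [forall i : 'I_n, A i j == 0]].

Definition Fm (G : numDomainType) n (A : 'M['F_2]_n) (v : 'rV[G]_#|Zs A|)
  (g : vecR n -> vecR n) : G :=
  \sum_(l < #|Zs A|) v 0 l * (coord (enum_val l) g)%:~R.

Lemma zc_enum n (A : 'M['F_2]_n) (l : 'I_#|Zs A|) : zc A (enum_val l).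
Proof. by have := enum_valP l; rewrite inE. Qed.

Lemma F_hom (G : numDomainType) n (A : 'M['F_2]_n) (v : 'rV[G]_#|Zs A|) :
  is_hom A (Fm v).
Proof.
move=> g h Hg Hh; rewrite /Fm -big_split /=; apply: eq_bigr => l _.
by rewrite (coord_hom (zc_enum l) Hg Hh) intrD mulrDr.
Qed.

Lemma F_lin (G : numDomainType) n (A : 'M['F_2]_n) (a : G) (u v : 'rV[G]_#|Zs A|) g :
  Fm (a *: u + v) g = a * Fm u g + Fm v g.
Proof.
rewrite /Fm big_distrr -big_split; apply: eq_bigr => l _.
by rewrite !mxE mulrDl /= mulrA.
Qed.

Lemma F_lift_zero (G : numDomainType) n (A : 'M['F_2]_n) (v : 'rV[G]_#|Zs A|) l :
  Fm v (bott_lift A (enum_val l)) = v 0 l.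
Proof.
rewrite /Fm (bigD1 l) //= big1 ?addr0.
  by rewrite coord_lift ?zc_enum // eqxx mulr1.
move=> l' nl; rewrite coord_lift ?zc_enum // (inj_eq enum_val_inj) eq_sym (negbTE nl).
by rewrite mulr0.
Qed.

Lemma F_lift_nz (G : numDomainType) n (A : 'M['F_2]_n) (v : 'rV[G]_#|Zs A|) i :
  ~~ zc A i -> Fm v (bott_lift A i) = 0.
Proof.
move=> nz; rewrite /Fm big1 // => l _; rewrite coord_lift ?zc_enum //.
case: eqP => [E|_]; last by rewrite mulr0.
by move: nz; rewrite E zc_enum.
Qed.

Lemma F_surj (G : numDomainType) n (A : 'M['F_2]_n) (phi : (vecR n -> vecR n) -> G) :
  bott_matrix A -> is_hom A phi ->
  exists v : 'rV[G]_#|Zs A|, forall g, bott_group A g -> Fm v g = phi g.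
Proof.
move=> bott Hphi; exists (\row_l phi (bott_lift A (enum_val l))).
move=> g Hg; apply: (hom_ext (F_hom _) Hphi _ Hg) => i.
case: (boolP (zc A i)) => zi.
  have Hi : i \in Zs A by rewrite inE.
  by rewrite -(enum_rankK_in Hi Hi) F_lift_zero mxE.
by rewrite F_lift_nz // phi_nz.
Qed.

Lemma F_inj (G : numDomainType) n (A : 'M['F_2]_n) (v : 'rV[G]_#|Zs A|) :
  (forall g, bott_group A g -> Fm v g = 0) -> v = 0.
Proof.
move=> H; apply/rowP => l; rewrite mxE -(F_lift_zero v l); apply: H; exact: bg_lift.
Qed.

Theorem mainTheorem4 (n : nat) (A : 'M['F_2]_n) :
  bott_matrix A ->
  exists b1 : nat,
    [/\ is_betti1 A b1, H1Z_iso_Zpow A b1 & b1 = zero_columns A].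
Proof.
move=> bott; exists #|Zs A|; split => //.
- exists (@Fm rat n A); split.
  + by move=> v; exact: F_hom.
  + by move=> a u v g _; exact: F_lin.
  + exact: F_inj.
  + by move=> phi Hphi; exact: F_surj.
- exists (@Fm int n A); split.
  + by move=> v; exact: F_hom.
  + by move=> u v g _; have := F_lin 1 u v g; rewrite scale1r mul1r.
  + exact: F_inj.
  + by move=> phi Hphi; exact: F_surj.
Qed.
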